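(* Let $\bar f:[-1,0]\to\mathbb R$ be continuous with $0<\bar f(x)<1/2$ for all $x\in[-1,0]$, and let $b=\sqrt{1-2\bar f(-1)}\in(0,1)$. Let $\bar T$ be a solution of $(1-x^2)\frac{d\bar T}{dx}+\bar T^2=-2(1-x^2)+(1-2\bar f(x))$, continuous at $x=-1$ with $\bar T(-1)=b$. Then $\bar T$ can be extended as a solution to the whole interval $[-1,0]$, and $\bar T(0)<0$. *)

(* Defs.v *)
From Stdlib Require Import Reals.
From Coquelicot Require Import Coquelicot.
Open Scope R_scope.


Definition cont_on_closed (f : R -> R) (a b : R) : Prop :=
  forall x, a <= x <= b ->
    filterlim f (within (fun y => a <= y <= b) (locally x)) (locally (f x)).

Definition ode_at (fbar T : R -> R) (x : R) : Prop :=
  ex_derive T x /\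
  (1 - x ^ 2) * Derive T x + (T x) ^ 2 = -2 * (1 - x ^ 2) + (1 - 2 * fbar x).

(* Main.v *)
Require Import Defs.
From Stdlib Require Import Reals Lra Lia Classical.
From Coquelicot Require Import Coquelicot.
Open Scope R_scope.


Lemma cont_iff (f : R -> R) x :
  continuous f x <-> (forall eps, 0 < eps -> exists d, 0 < d /\
     forall y, Rabs (y - x) < d -> Rabs (f y - f x) < eps).
Proof.
  unfold continuous. rewrite <- continuity_pt_filterlim.
  unfold continuity_pt, continue_in, limit1_in, limit_in. simpl. unfold R_dist.
  split.
  - intros H eps He. destruct (H eps He) as [d [Hd Hy]]. exists d; split; auto.
    intros y Hy'. destruct (Req_dec y x) as [->|Hne].
    + rewrite Rminus_eq_0, Rabs_R0; auto.
    + apply Hy. split; auto. unfold D_x, no_cond. split; auto.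
  - intros H eps He. destruct (H eps He) as [d [Hd Hy]]. exists d; split; auto.
    intros y [_ Hy']. apply Hy; auto.
Qed.

Definition clamp (lo hi x : R) := Rmax lo (Rmin hi x).

Lemma clamp_in lo hi x : lo <= hi -> lo <= clamp lo hi x <= hi.
Proof. intros; unfold clamp, Rmax, Rmin; repeat destruct Rle_dec; lra. Qed.

Lemma clamp_id lo hi x : lo <= x <= hi -> clamp lo hi x = x.
Proof. intros; unfold clamp, Rmax, Rmin; repeat destruct Rle_dec; lra. Qed.

Lemma clamp_lip lo hi x y : lo <= hi -> Rabs (clamp lo hi x - clamp lo hi y) <= Rabs (x - y).
Proof.
  intros; unfold clamp, Rmax, Rmin; repeat destruct Rle_dec;
  unfold Rabs; repeat destruct Rcase_abs; lra.
Qed.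

Lemma lip_cont (g : R -> R) k x : 0 <= k ->
  (forall y z, Rabs (g y - g z) <= k * Rabs (y - z)) -> continuous g x.
Proof.
  intros Hk Hl. apply cont_iff. intros eps He.
  exists (eps / (k + 1)). split. apply Rdiv_lt_0_compat; lra.
  intros y Hy. eapply Rle_lt_trans. apply Hl.
  apply Rle_lt_trans with ((k+1) * Rabs (y - x)).
  apply Rmult_le_compat_r. apply Rabs_pos. lra.
  apply Rmult_lt_reg_l with (/ (k+1)). apply Rinv_0_lt_compat; lra.
  rewrite <- Rmult_assoc, Rinv_l by lra. rewrite Rmult_1_l.
  unfold Rdiv in Hy. lra.
Qed.

Lemma clamp_cont lo hi x : lo <= hi -> continuous (clamp lo hi) x.
Proof.
  intros H. apply (lip_cont _ 1). lra. intros; rewrite Rmult_1_l; apply clamp_lip; auto.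
Qed.


Lemma first_cross (h : R -> R) (a b : R) :
  (forall x, a <= x <= b -> continuous h x) -> h a < 0 ->
  (forall x, a < x <= b -> h x = 0 -> exists d, is_derive h x d /\ d < 0) ->
  forall x, a <= x <= b -> h x < 0.
Proof.
  intros Hc Ha Hd x1 Hx1.
  destruct (Rlt_or_le (h x1) 0) as [Hlt|Hge]; auto. exfalso.
  set (E := fun x => a <= x <= x1 /\ forall t, a <= t <= x -> h t < 0).
  assert (HEb : bound E). { exists x1. intros y [Hy _]. lra. }
  assert (HEa : exists x, E x). { exists a. split. lra. intros t Ht. replace t with a by lra. auto. }
  destruct (completeness E HEb HEa) as [s [Hub Hlub]].
  assert (Has : a <= s). { apply Hub. split. lra. intros t Ht. replace t with a by lra. auto. }
  assert (Hsx : s <= x1). { apply Hlub. intros y [Hy _]. lra. }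
  assert (Hbel : forall t, a <= t < s -> h t < 0).
  { intros t Ht. apply NNPP. intro Hn.
    assert (Hubt : is_upper_bound E t).
    { intros y [Hy1 Hy2]. destruct (Rle_or_lt y t) as [|Hyt]; auto.
      exfalso. apply Hn. apply Hy2. lra. }
    specialize (Hlub t Hubt). lra. }
  destruct (Rcase_abs (h s)) as [Hs|Hs].
  -
    assert (Hsx1 : s < x1). { destruct (Req_dec s x1) as [->|]; lra. }
    destruct (proj1 (cont_iff h s) (Hc s ltac:(lra)) (- h s) ltac:(lra)) as [d [Hd0 Hdd]].
    set (s' := Rmin (s + d/2) x1).
    assert (Es' : E s').
    { split. unfold s'; unfold Rmin; destruct Rle_dec; lra.
      intros t Ht. destruct (Rlt_or_le t s). apply Hbel; lra.
      assert (Hts : Rabs (t - s) < d).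
      { unfold s' , Rmin in Ht; destruct Rle_dec in Ht; unfold Rabs; destruct Rcase_abs; lra. }
      specialize (Hdd t Hts). revert Hdd. unfold Rabs; destruct Rcase_abs; lra. }
    specialize (Hub s' Es'). unfold s', Rmin in Hub; destruct Rle_dec in Hub; lra.
  - destruct (Rle_lt_or_eq_dec 0 (h s) (Rge_le _ _ Hs)) as [Hpos|Hz].
    + destruct (proj1 (cont_iff h s) (Hc s ltac:(lra)) (h s) Hpos) as [d [Hd0 Hdd]].
      assert (Has' : a < s). { destruct (Req_dec a s) as [<-|]; lra. }
      set (t := Rmax a (s - d/2)).
      assert (Ht : a <= t < s). { unfold t, Rmax; destruct Rle_dec; lra. }
      specialize (Hbel t Ht).
      assert (Hts : Rabs (t - s) < d).
      { unfold t , Rmax in *; destruct Rle_dec; unfold Rabs; destruct Rcase_abs; lra. }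
      specialize (Hdd t Hts). revert Hdd. unfold Rabs; destruct Rcase_abs; lra.
    + assert (Has' : a < s). { destruct (Req_dec a s) as [<-|]; lra. }
      destruct (Hd s ltac:(lra) (eq_sym Hz)) as [dd [Hder Hdneg]].
      apply is_derive_Reals in Hder.
      destruct (Hder (- dd / 2) ltac:(lra)) as [del Hdel].
      set (eta := Rmin (del / 2) ((s - a) / 2)).
      assert (Heta : 0 < eta /\ eta < del /\ eta <= (s-a)/2).
      { unfold eta, Rmin; destruct Rle_dec; destruct del; simpl in *; lra. }
      assert (Hne : - eta <> 0) by lra.
      assert (Habs : Rabs (- eta) < del) by (rewrite Rabs_Ropp, Rabs_right; lra).
      specialize (Hdel (- eta) Hne Habs).
      specialize (Hbel (s + - eta) ltac:(lra)).
      rewrite <- Hz in Hdel.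
      apply Rabs_def2 in Hdel. destruct Hdel as [H1 H2].
      assert (Hq : (h (s + - eta) - 0) / - eta = - (h (s + - eta)) / eta) by (field; lra).
      rewrite Hq in H1, H2.
      assert (0 < - h (s + - eta) / eta) by (apply Rdiv_lt_0_compat; lra).
      assert (- h (s + - eta) / eta < dd + - dd/2) by lra.
      lra.
Qed.


Lemma minusR (x y : R) : minus x y = x - y.
Proof. reflexivity. Qed.

Lemma int_ex (g : R -> R) a z : (forall t, continuous g t) -> ex_RInt g a z.
Proof. intros H. apply (ex_RInt_continuous (V:=R_CompleteNormedModule)). intros; auto. Qed.

Lemma int_deriv (g : R -> R) a : (forall t, continuous g t) ->
  forall x, is_derive (fun x => RInt g a x) x (g x).
Proof.
  intros H x. apply (is_derive_RInt (V:=R_CompleteNormedModule) g (fun x => RInt g a x) a).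
  apply filter_forall. intros z. apply RInt_correct. apply int_ex; auto. auto.
Qed.

Lemma int_cont (g : R -> R) a : (forall t, continuous g t) ->
  forall x, continuous (fun x => RInt g a x) x.
Proof.
  intros H x. apply (ex_derive_continuous (K:=R_AbsRing) (V:=R_NormedModule)). eexists. apply int_deriv; auto.
Qed.

Lemma int_diff_le (g1 g2 h : R -> R) a z : a <= z ->
  (forall t, continuous g1 t) -> (forall t, continuous g2 t) -> (forall t, continuous h t) ->
  (forall s, a <= s <= z -> Rabs (g1 s - g2 s) <= h s) ->
  Rabs (RInt g1 a z - RInt g2 a z) <= RInt h a z.
Proof.
  intros Haz H1 H2 H3 Hb.
  assert (E : RInt g1 a z - RInt g2 a z = RInt (fun s => g1 s - g2 s) a z).
  { symmetry. apply (RInt_minus g1 g2); apply int_ex; auto. }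
  rewrite E. eapply Rle_trans. apply abs_RInt_le. auto.
  apply (ex_RInt_minus g1 g2); apply int_ex; auto.
  apply RInt_le; auto.
  apply int_ex. intros w.
  apply (continuous_comp (fun s => g1 s - g2 s) Rabs).
  apply (continuous_minus g1 g2); auto. apply continuous_Rabs.
  apply int_ex; auto.
  intros; apply Hb; lra.
Qed.

Lemma int_diff_le_const (g1 g2 : R -> R) a z M : a <= z ->
  (forall t, continuous g1 t) -> (forall t, continuous g2 t) ->
  (forall s, a <= s <= z -> Rabs (g1 s - g2 s) <= M) ->
  Rabs (RInt g1 a z - RInt g2 a z) <= (z - a) * M.
Proof.
  intros Haz H1 H2 Hb.
  assert (E : RInt g1 a z - RInt g2 a z = RInt (fun s => g1 s - g2 s) a z).
  { symmetry. apply (RInt_minus g1 g2); apply int_ex; auto. }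
  rewrite E. apply abs_RInt_le_const; auto.
  apply (ex_RInt_minus g1 g2); apply int_ex; auto.
Qed.

Lemma int_exp C k a z : 0 < k ->
  RInt (fun s => C * exp (k * (s - a))) a z = C * (exp (k * (z - a)) - 1) / k.
Proof.
  intros Hk.
  apply is_RInt_unique.
  assert (H : is_RInt (fun s => C * exp (k*(s-a))) a z
     (minus (C/k*exp(k*(z-a))) (C/k*exp(k*(a-a))))).
  { apply (is_RInt_derive (V:=R_CompleteNormedModule) (fun s => C/k*exp(k*(s-a)))).
  - intros x _. auto_derive. auto. replace (x + - a) with (x - a) by ring. field. lra.
  - intros x _. apply (continuous_mult (fun _ => C) (fun s => exp (k * (s - a)))).
    apply continuous_const.
    apply (continuous_comp (fun s => k * (s - a)) exp).
    apply (lip_cont _ (Rabs k)). apply Rabs_pos. intros y w.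
    rewrite <- Rabs_mult. right. f_equal. ring.
    apply (ex_derive_continuous (K:=R_AbsRing) (V:=R_NormedModule)). auto_derive. auto. }
  assert (E : C * (exp (k * (z - a)) - 1) / k = minus (C/k*exp(k*(z-a))) (C/k*exp(k*(a-a)))).
  { unfold minus, plus, opp; simpl. replace (a - a) with 0 by ring. rewrite Rmult_0_r, exp_0. field. lra. }
  rewrite E. exact H.
Qed.

Lemma geo_small K eps : 0 <= K -> 0 < eps -> exists N, forall n, (n >= N)%nat -> K * (/2)^n < eps.
Proof.
  intros HK He.
  destruct (pow_lt_1_zero (/2) ltac:(rewrite Rabs_right; lra) (eps / (K+1)) ltac:(apply Rdiv_lt_0_compat; lra)) as [N HN].
  exists N. intros n Hn. specialize (HN n Hn).
  rewrite Rabs_right in HN by (apply Rle_ge, pow_le; lra).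
  assert (0 <= (/2)^n) by (apply pow_le; lra).
  apply Rle_lt_trans with ((K+1) * (/2)^n). nra.
  apply Rmult_lt_reg_l with (/(K+1)). apply Rinv_0_lt_compat; lra.
  rewrite <- Rmult_assoc, Rinv_l by lra. unfold Rdiv in HN. lra.
Qed.

Lemma zero_geo z K : 0 <= K -> (forall n, Rabs z <= K * (/2)^n) -> z = 0.
Proof.
  intros HK H. destruct (Req_dec z 0) as [|Hz]; auto. exfalso.
  assert (Hp : 0 < Rabs z) by (apply Rabs_pos_lt; auto).
  destruct (geo_small K (Rabs z) HK Hp) as [N HN].
  specialize (HN N (le_n N)). specialize (H N). lra.
Qed.


Lemma ball_R (x y : R) (e : R) : ball x e y <-> Rabs (y - x) < e.
Proof. reflexivity. Qed.

Lemma exp_mono x y : x <= y -> exp x <= exp y.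
Proof. intros [H|H]. left; apply exp_increasing; auto. rewrite H. right; auto. Qed.

Lemma exp_ge1 x : 0 <= x -> 1 <= exp x.
Proof. intros; pose proof (exp_ineq1_le x); lra. Qed.

Lemma cont_exp_lin C k a x : continuous (fun s => C * exp (k * (s - a))) x.
Proof.
  apply (continuous_mult (fun _ => C) (fun s => exp (k * (s - a)))).
  apply continuous_const.
  apply (continuous_comp (fun s => k * (s - a)) exp).
  apply (lip_cont _ (Rabs k)). apply Rabs_pos. intros y w.
  rewrite <- Rabs_mult. right. f_equal. ring.
  apply (ex_derive_continuous (K:=R_AbsRing) (V:=R_NormedModule)). auto_derive. auto.
Qed.

Lemma sub_y0 (y0 u : R) : y0 + u - y0 = u.
Proof. ring. Qed.
Lemma sub_y0' (y0 u v : R) : y0 + u - (y0 + v) = u - v.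
Proof. ring. Qed.

Lemma rearr (p y0 u v : R) : p - (y0 + v) = (p - (y0 + u)) + (u - v).
Proof. ring. Qed.

Fixpoint phi (F : R -> R -> R) (a b y0 : R) (n : nat) : R -> R :=
  match n with
  | O => fun _ => y0
  | S k => fun x => y0 + RInt (fun s => F s (phi F a b y0 k s)) a (clamp a b x)
  end.

Lemma phi_cont F a b y0 : a <= b ->
  (forall u, (forall t, continuous u t) -> forall t, continuous (fun s => F s (u s)) t) ->
  forall n t, continuous (phi F a b y0 n) t.
Proof.
  intros Hab HF n. induction n; intros t; simpl.
  - apply continuous_const.
  - apply (continuous_plus (fun _ => y0) (fun x => RInt (fun s => F s (phi F a b y0 n s)) a (clamp a b x))).
    apply continuous_const.
    apply (continuous_comp (clamp a b) (fun x => RInt (fun s => F s (phi F a b y0 n s)) a x)).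
    apply clamp_cont; auto.
    apply int_cont. apply HF. auto.
Qed.

Lemma picard (F : R -> R -> R) (a b y0 Lc : R) :
  a < b -> 0 < Lc ->
  (forall u, (forall t, continuous u t) -> forall t, continuous (fun s => F s (u s)) t) ->
  (forall t y z, Rabs (F t y - F t z) <= Lc * Rabs (y - z)) ->
  exists P : R -> R, (forall t, continuous P t) /\ P a = y0 /\
    (forall t, a < t < b -> is_derive P t (F t (P t))).
Proof.
  intros Hab HLc HF HL.
  set (ph := phi F a b y0).
  assert (Hpc : forall n t, continuous (ph n) t) by (apply phi_cont; auto; lra).
  assert (Hcl : forall x, a <= clamp a b x <= b) by (intros; apply clamp_in; lra).
  destruct (continuity_ab_maj (fun t => Rabs (F t y0)) a b ltac:(lra)) as [Mx [HMx _]].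
  { intros t _. apply continuity_pt_filterlim.
    apply (continuous_comp (fun s => F s y0) Rabs). apply (HF (fun _ => y0)).
    intros; apply continuous_const. apply continuous_Rabs. }
  set (M := Rabs (F Mx y0)).
  assert (HM0 : 0 <= M) by apply Rabs_pos.
  set (B := (b - a) * M).
  assert (HB0 : 0 <= B) by (unfold B; apply Rmult_le_pos; lra).
  assert (D : forall n x, Rabs (ph (S n) x - ph n x) <= B * (/2)^n * exp (2*Lc*(clamp a b x - a))).
  { intros n. induction n; intros x.
    - simpl. change (ph 1%nat x) with (y0 + RInt (fun s => F s y0) a (clamp a b x)). change (ph 0%nat x) with y0. rewrite sub_y0.
      specialize (Hcl x).
      eapply Rle_trans. apply abs_RInt_le_const. lra.
      apply int_ex. apply (HF (fun _ => y0)). intros; apply continuous_const.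
      intros t Ht. apply HMx. lra.
      rewrite Rmult_1_r.
      assert (1 <= exp (2 * Lc * (clamp a b x - a))) by (apply exp_ge1; nra).
      apply Rle_trans with B. unfold B. apply Rmult_le_compat_r; lra. nra.
    - specialize (Hcl x).
      change (ph (S (S n)) x) with (y0 + RInt (fun s => F s (ph (S n) s)) a (clamp a b x)).
      change (ph (S n) x) with (y0 + RInt (fun s => F s (ph n s)) a (clamp a b x)).
      rewrite sub_y0'.
      eapply Rle_trans. apply int_diff_le with (h := fun s => (Lc * B * (/2)^n) * exp (2*Lc*(s - a))).
      lra. apply HF, Hpc. apply HF, Hpc. intros; apply cont_exp_lin.
      intros s Hs. eapply Rle_trans. apply HL.
      replace (Lc * B * (/2)^n * exp (2 * Lc * (s - a))) with (Lc * (B * (/2)^n * exp (2*Lc*(clamp a b s - a)))).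
      apply Rmult_le_compat_l. lra. apply IHn.
      rewrite clamp_id. ring. lra.
      rewrite int_exp by lra.
      set (E := exp (2 * Lc * (clamp a b x - a))).
      assert (0 <= E) by (unfold E; left; apply exp_pos).
      assert (0 <= (/2)^n) by (apply pow_le; lra).
      simpl. apply Rle_trans with (B * (/2 * (/2)^n) * (E - 1)).
      right. field. lra. nra. }
  set (C0 := B * exp (2 * Lc * (b - a))).
  assert (HC0 : 0 <= C0) by (unfold C0; apply Rmult_le_pos; auto; left; apply exp_pos).
  assert (D2 : forall n x, Rabs (ph (S n) x - ph n x) <= C0 * (/2)^n).
  { intros n x. eapply Rle_trans. apply D. unfold C0.
    assert (0 <= (/2)^n) by (apply pow_le; lra).
    assert (exp (2 * Lc * (clamp a b x - a)) <= exp (2 * Lc * (b - a))).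
    { apply exp_mono. specialize (Hcl x). nra. }
    assert (0 <= B * (/2)^n) by (apply Rmult_le_pos; auto).
    apply Rle_trans with (B * (/2)^n * exp (2 * Lc * (b - a))).
    apply Rmult_le_compat_l; auto. right; ring. }
  assert (Tel : forall k n x, Rabs (ph (n + k)%nat x - ph n x) <= 2*C0*(/2)^n - 2*C0*(/2)^(n+k)).
  { intros k. induction k; intros n x.
    - rewrite Nat.add_0_r, Rminus_eq_0, Rabs_R0. lra.
    - replace (n + S k)%nat with (S (n + k)) by lia.
      replace (ph (S (n + k)) x - ph n x) with ((ph (S (n + k)) x - ph (n+k)%nat x) + (ph (n+k)%nat x - ph n x)) by ring.
      eapply Rle_trans. apply Rabs_triang.
      specialize (D2 (n+k)%nat x). specialize (IHk n x).
      simpl. lra. }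
  assert (Tel2 : forall n m x, (n <= m)%nat -> Rabs (ph m x - ph n x) <= 2*C0*(/2)^n).
  { intros n m x Hnm. replace m with (n + (m - n))%nat by lia.
    eapply Rle_trans. apply Tel. assert (0 <= (/2)^(n + (m-n))) by (apply pow_le; lra). nra. }
  assert (HC : forall x, Cauchy_crit (fun n => ph n x)).
  { intros x eps He. destruct (geo_small (2*C0) eps ltac:(lra) He) as [N HN].
    exists N. intros n m Hn Hm. unfold Rdist.
    destruct (Nat.le_ge_cases n m) as [Hnm|Hnm].
    - rewrite Rabs_minus_sym. eapply Rle_lt_trans. apply Tel2; auto. apply HN; auto.
    - eapply Rle_lt_trans. apply Tel2; auto. apply HN; auto. }
  pose (P := fun x => proj1_sig (Rcomplete.R_complete _ (HC x))).
  assert (HP : forall x, Un_cv (fun n => ph n x) (P x)) by (intro x; exact (proj2_sig _)).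
  assert (Tail : forall n x, Rabs (P x - ph n x) <= 2*C0*(/2)^n).
  { intros n x. apply le_epsilon. intros eps He.
    destruct (HP x eps He) as [N HN].
    specialize (HN (Nat.max N n) ltac:(lia)). unfold Rdist in HN.
    specialize (Tel2 n (Nat.max N n) x ltac:(lia)).
    replace (P x - ph n x) with ((ph (Nat.max N n) x - ph n x) - (ph (Nat.max N n) x - P x)) by ring.
    eapply Rle_trans. apply Rabs_triang. rewrite Rabs_Ropp. lra. }
  assert (HPc : forall t, continuous P t).
  { intros x. apply cont_iff. intros eps He.
    destruct (geo_small (2*C0) (eps/3) ltac:(lra) ltac:(lra)) as [N HN].
    specialize (HN N (le_n N)).
    destruct (proj1 (cont_iff _ x) (Hpc N x) (eps/3) ltac:(lra)) as [d [Hd Hdd]].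
    exists d. split; auto. intros y Hy.
    replace (P y - P x) with ((P y - ph N y) + (ph N y - ph N x) - (P x - ph N x)) by ring.
    eapply Rle_lt_trans. apply Rabs_triang. rewrite Rabs_Ropp.
    eapply Rle_lt_trans. apply Rplus_le_compat_r. apply Rabs_triang.
    pose proof (Tail N x). pose proof (Tail N y). pose proof (Hdd y Hy). lra. }
  set (g := fun s => F s (P s)).
  assert (Hg : forall t, continuous g t) by (apply HF; auto).
  assert (Fix : forall x, P x = y0 + RInt g a (clamp a b x)).
  { intros x. apply Rminus_diag_uniq.
    apply (zero_geo _ (2*C0 + (b-a)*Lc*(2*C0))). 
    { assert (0 <= (b-a)*Lc) by (apply Rmult_le_pos; lra). nra. }
    intros n. specialize (Hcl x).
    assert (Eq : ph (S n) x = y0 + RInt (fun s => F s (ph n s)) a (clamp a b x)) by reflexivity.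
    rewrite (rearr _ _ (RInt (fun s => F s (ph n s)) a (clamp a b x))), <- Eq.
    eapply Rle_trans. apply Rabs_triang.
    assert (H1 : Rabs (RInt (fun s => F s (ph n s)) a (clamp a b x) - RInt g a (clamp a b x))
              <= (clamp a b x - a) * (Lc * (2*C0*(/2)^n))).
    { apply int_diff_le_const. lra. apply HF, Hpc. auto.
      intros s _. unfold g. eapply Rle_trans. apply HL. apply Rmult_le_compat_l. lra.
      rewrite Rabs_minus_sym. apply Tail. }
    pose proof (Tail (S n) x). simpl in H.
    assert (0 <= (/2)^n) by (apply pow_le; lra).
    assert (0 <= C0 * (/2)^n) by (apply Rmult_le_pos; auto).
    assert ((clamp a b x - a) * (Lc * (2*C0*(/2)^n)) <= (b - a) * (Lc * (2*C0*(/2)^n))).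
    { apply Rmult_le_compat_r. apply Rmult_le_pos. lra. nra. lra. }
    nra. }
  exists P. split; auto. split.
  - rewrite Fix. rewrite clamp_id by lra. rewrite RInt_point. unfold zero; simpl. apply Rplus_0_r.
  - intros t Ht. unfold g in Fix.
    apply (is_derive_ext_loc (fun y => y0 + RInt g a y)).
    + assert (He : 0 < Rmin (t - a) (b - t)) by (apply Rmin_pos; lra).
      exists (mkposreal _ He). intros y Hy. apply ball_R in Hy. simpl in Hy.
      rewrite Fix. rewrite (clamp_id a b y). reflexivity.
      pose proof (proj1 (ball_R t y _) Hy) as Hy2. clear Hy. revert Hy2. unfold Rmin. destruct (Rle_dec (t-a) (b-t)); unfold Rabs; destruct (Rcase_abs (y - t)); intros Hy; simpl in Hy; lra.
    + pose proof (is_derive_plus (fun _ => y0) (fun y => RInt g a y) t zero (g t)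
                   (is_derive_const y0 t) (int_deriv g a Hg t)) as H.
      rewrite plus_zero_l in H. exact H.
Qed.


Definition Lb (be x : R) := be + (1 - x^2) / (x - be).

Lemma Lb_deriv be x : x - be <> 0 ->
  is_derive (Lb be) x (- (2 * x) / (x - be) - (1 - x^2) / ((x - be) * (x - be))).
Proof.
  intros H. unfold Lb. auto_derive. replace (x + - be) with (x - be) by ring. auto.
  replace (x + - be) with (x - be) by ring. field. auto.
Qed.

Lemma Lb_cont be x : x - be <> 0 -> continuous (Lb be) x.
Proof.
  intros H. apply (ex_derive_continuous (K:=R_AbsRing) (V:=R_NormedModule)).
  eexists. apply Lb_deriv; auto.
Qed.

Lemma barrier (Y fv : R -> R) (a z be K : R) :
  -1 < a -> a <= z -> z <= be/4 -> 0 < be -> be < 1 -> 1 <= K -> 2/be <= K ->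
  (forall x, a <= x <= z -> continuous Y x) ->
  Y a < -a -> Lb be a < Y a ->
  (forall x, a < x <= z -> 0 < fv x /\ be^2 < 1 - 2 * fv x) ->
  (forall x, a < x <= z -> -K <= Y x <= K ->
     is_derive Y x (-2 + (1 - 2 * fv x - (Y x)^2)/(1 - x^2))) ->
  forall x, a <= x <= z -> Lb be x < Y x < -x.
Proof.
  intros Ha Haz Hz Hb0 Hb1 HK1 HK2 HYc HYa HLa Hfv HD x Hx.
  assert (Hx2 : forall x, a <= x <= z -> 0 < 1 - x^2) by (intros; nra).
  split.
  - assert (H := first_cross (fun x => Lb be x - Y x) a z).
    assert (Hneg : Lb be x - Y x < 0); [|lra].
    apply H; auto; clear H.
    + intros w Hw. apply (continuous_minus (Lb be) Y). apply Lb_cont; lra. auto.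
    + lra.
    + intros w Hw Hz0.
      assert (HYw : Y w = Lb be w) by lra.
      assert (Hq : 0 <= (1 - w^2)/(be - w)) by (apply Rdiv_le_0_compat; [pose proof (Hx2 w ltac:(lra)); lra|lra]).
      assert (Hq2 : (1 - w^2)/(be - w) * (be - w) = 1 - w^2) by (field; lra).
      assert (HLw : Lb be w = be - (1 - w^2)/(be - w)) by (unfold Lb; field; split; lra).
      assert (Hbd : -K <= Y w <= K).
      { rewrite HYw, HLw. split; [|lra].
        set (q := (1 - w^2)/(be - w)) in *.
        assert (q * (3 * be / 4) <= 1) by nra.
        assert (q <= 4 / (3 * be)).
        { apply Rmult_le_reg_r with (3 * be / 4). lra.
          replace (4 / (3 * be) * (3 * be / 4)) with 1 by (field; lra). lra. }
        assert (4 / (3 * be) <= 2 / be).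
        { unfold Rdiv. rewrite Rinv_mult. 
          assert (0 < / be) by (apply Rinv_0_lt_compat; lra). nra. }
        lra. }
      specialize (HD w ltac:(lra) Hbd).
      exists (minus (- (2 * w) / (w - be) - (1 - w^2) / ((w - be) * (w - be)))
                    (-2 + (1 - 2 * fv w - (Y w)^2)/(1 - w^2))).
      split.
      * apply (is_derive_minus (Lb be) Y). apply Lb_deriv; lra. auto.
      * unfold minus, plus, opp; simpl. rewrite HYw. unfold Lb.
        destruct (Hfv w ltac:(lra)) as [Hf1 Hf2].
        pose proof (Hx2 w ltac:(lra)) as Hpw.
        match goal with |- ?e < 0 =>
          assert (Hk : (1 - w^2) * e = be^2 - 1 + 2 * fv w) by (field; lra) end.
        nra.
  - assert (H := first_cross (fun x => Y x + x) a z).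
    assert (Hneg : Y x + x < 0); [|lra].
    apply H; auto; clear H.
    + intros w Hw. apply (continuous_plus Y (fun y => y)). auto. apply continuous_id.
    + lra.
    + intros w Hw Hz0.
      assert (HYw : Y w = - w) by lra.
      assert (Hbd : -K <= Y w <= K) by (rewrite HYw; split; lra).
      specialize (HD w ltac:(lra) Hbd).
      exists (plus (-2 + (1 - 2 * fv w - (Y w)^2)/(1 - w^2)) one).
      split.
      * apply (is_derive_plus Y (fun y => y)). auto. apply (is_derive_id (K:=R_AbsRing)).
      * unfold plus, one; simpl. rewrite HYw.
        destruct (Hfv w ltac:(lra)) as [Hf1 Hf2].
        pose proof (Hx2 w ltac:(lra)) as Hpw.
        match goal with |- ?e < 0 =>
          assert (Hk : (1 - w^2) * e = - 2 * fv w) by (field; lra) end.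
        nra.
Qed.


Definition Gf (fv : R -> R) (s y : R) := -2 + (1 - 2 * fv s - y^2)/(1 - s^2).

Lemma uniq (P T fv : R -> R) (a x K : R) :
  -1 < a -> a <= x -> x <= 0 -> 0 < K ->
  P a = T a ->
  (forall s, a <= s <= x -> continuous P s) -> (forall s, a <= s <= x -> continuous T s) ->
  (forall s, a <= s <= x -> Rabs (P s) <= K /\ Rabs (T s) <= K) ->
  (forall s, a < s < x -> is_derive P s (Gf fv s (P s)) /\ is_derive T s (Gf fv s (T s))) ->
  P x = T x.
Proof.
  intros Ha Hax Hx0 HK HPa HPc HTc Hbd HD.
  assert (Ha2 : 0 < 1 - a^2) by nra.
  set (La := 2 * K / (1 - a^2)).
  set (E := fun s => (P s - T s) * (P s - T s) * exp (- (2 * La) * s)).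
  set (dE := fun s => 2 * (P s - T s) * (Gf fv s (P s) - Gf fv s (T s)) * exp (- (2 * La) * s)
                      + (P s - T s) * (P s - T s) * (- (2 * La) * exp (- (2 * La) * s))).
  destruct (MVT_gen E a x dE) as [xi [Hxi HE]].
  - intros s Hs. rewrite Rmin_left in Hs by lra. rewrite Rmax_right in Hs by lra.
    destruct (HD s Hs) as [H1 H2].
    unfold E, dE. auto_derive.
    + repeat split; eexists; eauto.
    + replace (Derive (fun x0 : R => P x0) s) with (Gf fv s (P s)) by (symmetry; apply is_derive_unique; exact H1).
      replace (Derive (fun x0 : R => T x0) s) with (Gf fv s (T s)) by (symmetry; apply is_derive_unique; exact H2). ring.
  - intros s Hs. rewrite Rmin_left in Hs by lra. rewrite Rmax_right in Hs by lra.
    apply continuity_pt_filterlim. unfold E.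
    apply (continuous_mult (fun s => (P s - T s) * (P s - T s)) (fun s => exp (- (2 * La) * s))).
    apply (continuous_mult (fun s => P s - T s) (fun s => P s - T s));
      apply (continuous_minus P T); auto.
    apply (ex_derive_continuous (K:=R_AbsRing) (V:=R_NormedModule)). auto_derive. auto.
  - rewrite Rmin_left in Hxi by lra. rewrite Rmax_right in Hxi by lra.
    assert (HEa : E a = 0) by (unfold E; rewrite HPa; ring).
    assert (HdE : dE xi <= 0).
    { unfold dE, Gf.
      destruct (Hbd xi Hxi) as [B1 B2].
      apply Rabs_le_between in B1. apply Rabs_le_between in B2.
      assert (Hd : 1 - a^2 <= 1 - xi^2) by nra.
      assert (Hd0 : 0 < 1 - xi^2) by lra.
      set (ex := exp (- (2 * La) * xi)).
      assert (Hex : 0 < ex) by apply exp_pos.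
      set (w := P xi - T xi).
      assert (Hq : (P xi + T xi) / (1 - xi^2) + La >= 0).
      { unfold La.
        assert (2 * K / (1 - xi^2) <= 2 * K / (1 - a^2)).
        { unfold Rdiv. apply Rmult_le_compat_l. lra. apply Rinv_le_contravar; lra. }
        assert (- (2 * K) / (1 - xi^2) <= (P xi + T xi) / (1 - xi^2)).
        { unfold Rdiv. apply Rmult_le_compat_r. left; apply Rinv_0_lt_compat; lra. lra. }
        assert (- (2 * K) / (1 - xi^2) = - (2 * K / (1 - xi^2))) by (field; lra).
        lra. }
      match goal with |- ?e <= 0 =>
        assert (Hk : e = - 2 * (w * w) * ex * ((P xi + T xi) / (1 - xi^2) + La))
          by (unfold w; field; lra) end.
      rewrite Hk.
      assert (0 <= w * w) by nra.
      assert (0 <= w * w * ex) by nra.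
      nra. }
    assert (HEx : E x <= 0) by nra.
    unfold E in HEx.
    assert (0 < exp (- (2 * La) * x)) by apply exp_pos.
    assert (HH : (P x - T x) * (P x - T x) <= 0) by nra.
    nra.
Qed.


Lemma cc_eps (f : R -> R) lo hi x :
  filterlim f (within (fun y => lo <= y <= hi) (locally x)) (locally (f x)) ->
  forall eps, 0 < eps -> exists d, 0 < d /\
    forall y, lo <= y <= hi -> Rabs (y - x) < d -> Rabs (f y - f x) < eps.
Proof.
  intros H eps He.
  destruct (proj1 (filterlim_locally f (f x)) H (mkposreal eps He)) as [d Hd].
  exists d. split. destruct d; auto.
  intros y Hy Hyx. apply (Hd y). apply ball_R. auto. auto.
Qed.

Lemma eps_cc (f : R -> R) lo hi x :
  (forall eps, 0 < eps -> exists d, 0 < d /\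
    forall y, lo <= y <= hi -> Rabs (y - x) < d -> Rabs (f y - f x) < eps) ->
  filterlim f (within (fun y => lo <= y <= hi) (locally x)) (locally (f x)).
Proof.
  intros H. apply filterlim_locally. intros [eps He].
  destruct (H eps He) as [d [Hd Hdd]].
  exists (mkposreal d Hd). intros y Hy Hin. apply ball_R. apply Hdd; auto.
Qed.

Lemma sqc_lip K y z : 0 <= K ->
  Rabs ((clamp (-K) K y)^2 - (clamp (-K) K z)^2) <= 2 * K * Rabs (y - z).
Proof.
  intros HK.
  pose proof (clamp_in (-K) K y ltac:(lra)). pose proof (clamp_in (-K) K z ltac:(lra)).
  pose proof (clamp_lip (-K) K y z ltac:(lra)).
  set (u := clamp (-K) K y) in *. set (v := clamp (-K) K z) in *.
  replace (u^2 - v^2) with ((u - v) * (u + v)) by ring.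
  rewrite Rabs_mult.
  assert (Rabs (u + v) <= 2 * K) by (apply Rabs_le; lra).
  pose proof (Rabs_pos (u - v)). pose proof (Rabs_pos (u + v)).
  nra.
Qed.

Lemma ode_deriv fbar T x : 0 < 1 - x^2 -> ode_at fbar T x -> is_derive T x (Gf fbar x (T x)).
Proof.
  intros Hx [[l Hl] Heq].
  rewrite (is_derive_unique _ _ _ Hl) in Heq.
  replace (Gf fbar x (T x)) with l. auto.
  unfold Gf. apply Rminus_diag_uniq.
  replace (l - (-2 + (1 - 2 * fbar x - T x ^ 2) / (1 - x ^ 2))) with
    (((1 - x ^ 2) * l + T x ^ 2 - (-2 * (1 - x ^ 2) + (1 - 2 * fbar x))) / (1 - x^2)) by (field; lra).
  rewrite Heq. unfold Rdiv. ring.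
Qed.

Lemma Lb_ge be x : 0 < be -> be < 1 -> -1 < x -> x <= be / 4 -> - (2 / be) <= Lb be x.
Proof.
  intros Hb0 Hb1 Hx1 Hx2.
  assert (HLw : Lb be x = be - (1 - x^2)/(be - x)) by (unfold Lb; field; split; lra).
  rewrite HLw.
  assert (Hq : 0 <= (1 - x^2)/(be - x)) by (apply Rdiv_le_0_compat; [nra|lra]).
  assert (Hq2 : (1 - x^2)/(be - x) * (be - x) = 1 - x^2) by (field; lra).
  set (q := (1 - x^2)/(be - x)) in *.
  assert (q * (3 * be / 4) <= 1) by nra.
  assert (q <= 4 / (3 * be)).
  { apply Rmult_le_reg_r with (3 * be / 4). lra.
    replace (4 / (3 * be) * (3 * be / 4)) with 1 by (field; lra). lra. }
  assert (4 / (3 * be) <= 2 / be).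
  { unfold Rdiv. rewrite Rinv_mult.
    assert (0 < / be) by (apply Rinv_0_lt_compat; lra). nra. }
  lra.
Qed.


Theorem proposition7 (fbar T : R -> R) (c : R) :
  cont_on_closed fbar (-1) 0 ->
  (forall x, -1 <= x <= 0 -> 0 < fbar x < 1 / 2) ->
  -1 < c <= 0 ->
  (forall x, -1 < x < c -> ode_at fbar T x) ->
  filterlim T (at_right (-1)) (locally (T (-1))) ->
  T (-1) = sqrt (1 - 2 * fbar (-1)) ->
  exists S : R -> R,
    (forall x, -1 <= x < c -> S x = T x) /\
    cont_on_closed S (-1) 0 /\
    (forall x, -1 < x < 0 -> ode_at fbar S x) /\
    S 0 < 0.
Proof.
  intros Hf Hfb Hc Hode HT Hb.
  set (ft := fun x => fbar (clamp (-1) 0 x)).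
  assert (Hftc : forall x, continuous ft x).
  { intros x. apply cont_iff. intros eps He.
    assert (Hcx := clamp_in (-1) 0 x ltac:(lra)).
    destruct (cc_eps _ _ _ _ (Hf _ Hcx) eps He) as [d [Hd Hdd]].
    exists d. split; auto. intros y Hy. unfold ft. apply Hdd. apply clamp_in; lra.
    eapply Rle_lt_trans. apply clamp_lip. lra. auto. }
  assert (Hftb : forall x, 0 < ft x < 1/2) by (intros; apply Hfb, clamp_in; lra).
  assert (Hftid : forall x, -1 <= x <= 0 -> ft x = fbar x) by (intros; unfold ft; rewrite clamp_id; auto).
  destruct (continuity_ab_maj ft (-1) 0 ltac:(lra)) as [xM [HxM HxMr]].
  { intros t _. apply continuity_pt_filterlim. apply Hftc. }
  set (fM := ft xM).
  assert (HfM : forall t, ft t <= fM).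
  { intros t. replace (ft t) with (ft (clamp (-1) 0 t)). apply HxM, clamp_in; lra.
    unfold ft. rewrite (clamp_id (-1) 0 (clamp (-1) 0 t)); auto. apply clamp_in; lra. }
  pose proof (Hftb xM) as HfM2. fold fM in HfM2.
  set (m0 := 1 - 2 * fM).
  set (sq := sqrt m0).
  assert (Hsq : sq * sq = m0) by (apply sqrt_sqrt; unfold m0; lra).
  assert (Hsq0 : 0 <= sq) by apply sqrt_pos.
  set (be := sq / 2).
  assert (Hbe : 0 < be < 1/2) by (unfold be, m0 in *; nra).
  assert (Hbe2 : forall t, be^2 < 1 - 2 * ft t).
  { intros t. pose proof (HfM t). unfold be. unfold m0 in Hsq. nra. }
  set (bb := T (-1)).
  assert (Hbb : 0 <= bb /\ bb * bb = 1 - 2 * fbar (-1)).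
  { unfold bb; rewrite Hb. split. apply sqrt_pos. apply sqrt_sqrt.
    pose proof (Hfb (-1) ltac:(lra)). lra. }
  assert (Hbb2 : 2 * be <= bb /\ bb < 1).
  { pose proof (HfM (-1)). rewrite Hftid in H by lra.
    pose proof (Hfb (-1) ltac:(lra)). unfold be. unfold m0 in Hsq. nra. }
  set (eps := Rmin (be/2) ((1-bb)/2)).
  assert (Heps : 0 < eps) by (apply Rmin_pos; lra).
  destruct (proj1 (filterlim_locally T (T (-1))) HT (mkposreal eps Heps)) as [del Hdel].
  set (r := Rmin del (Rmin ((1-bb)/2) (c+1))).
  assert (Hr : 0 < r /\ r <= del /\ r <= (1-bb)/2 /\ r <= c + 1).
  { unfold r. destruct del as [del Hd]; simpl.
    repeat split.
    apply Rmin_pos; auto. apply Rmin_pos; lra.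
    apply Rmin_l. eapply Rle_trans. apply Rmin_r. apply Rmin_l.
    eapply Rle_trans. apply Rmin_r. apply Rmin_r. }
  set (a := -1 + r / 2).
  assert (Ha : -1 < a /\ a < c) by (unfold a; lra).
  assert (HTa : Rabs (T a - bb) < eps).
  { apply (Hdel a). apply ball_R. unfold a. rewrite Rabs_right; lra. unfold a; lra. }
  assert (Heps2 : eps <= be/2 /\ eps <= (1-bb)/2) by (split; [apply Rmin_l|apply Rmin_r]).
  apply Rabs_lt_between in HTa.
  destruct Hr as [Hr1 [Hr2 [Hr3 Hr4]]]. destruct Heps2 as [He1 He2]. destruct Hbb2 as [Hbb3 Hbb4].
  assert (HTa1 : T a < -a) by (unfold a in *; lra).
  assert (HLa : Lb be a < T a).
  { unfold Lb. assert ((1 - a^2)/(a - be) <= 0).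
    { unfold Rdiv. assert (/ (a - be) < 0) by (apply Rinv_lt_0_compat; lra).
      assert (0 <= 1 - a^2) by nra. nra. }
    lra. }
  set (K := 2 / be + 1).
  assert (HK1 : 1 <= K /\ 2 / be <= K).
  { unfold K. assert (0 < 2 / be) by (apply Rdiv_lt_0_compat; lra). lra. }
  set (e := be / 2).
  assert (Hae : a < e) by (unfold e; lra).
  set (dm := Rmin (1 - a^2) (1 - e^2)).
  assert (Hdm0 : 0 < dm) by (unfold dm; apply Rmin_pos; unfold e; nra).
  assert (Hdm : forall t, dm <= 1 - (clamp a e t)^2).
  { intros t. pose proof (clamp_in a e t ltac:(lra)) as Hct.
    set (u := clamp a e t) in *.
    destruct (Rle_or_lt u 0).
    - apply Rle_trans with (1 - a^2). apply Rmin_l. nra.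
    - apply Rle_trans with (1 - e^2). apply Rmin_r. nra. }
  set (hinv := fun t => / (1 - (clamp a e t)^2)).
  set (sqc := fun y => (clamp (-K) K y)^2).
  set (F := fun t y => -2 + (1 - 2 * ft t - sqc y) * hinv t).
  set (Lc := 2 * K / dm + 1).
  assert (HLc : 0 < Lc).
  { unfold Lc. assert (0 < 2 * K / dm) by (apply Rdiv_lt_0_compat; lra). lra. }
  assert (Hhc : forall t, continuous hinv t).
  { intros t. apply (continuous_Rinv_comp (fun t => 1 - (clamp a e t)^2)).
    apply (continuous_minus (fun _ => 1) (fun t => (clamp a e t)^2)). apply continuous_const.
    apply (continuous_comp (clamp a e) (fun y => y^2)). apply clamp_cont; lra.
    apply (ex_derive_continuous (K:=R_AbsRing) (V:=R_NormedModule)). auto_derive. auto.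
    pose proof (Hdm t). lra. }
  assert (Hhb : forall t, 0 < hinv t <= / dm).
  { intros t. pose proof (Hdm t). unfold hinv. split.
    apply Rinv_0_lt_compat; lra. apply Rinv_le_contravar; lra. }
  assert (HF : forall u, (forall t, continuous u t) -> forall t, continuous (fun s => F s (u s)) t).
  { intros u Hu t. unfold F.
    apply (continuous_plus (fun _ => -2) (fun s => (1 - 2 * ft s - sqc (u s)) * hinv s)).
    apply continuous_const.
    apply (continuous_mult (fun s => 1 - 2 * ft s - sqc (u s)) hinv); auto.
    apply (continuous_minus (fun s => 1 - 2 * ft s) (fun s => sqc (u s))).
    apply (continuous_minus (fun _ => 1) (fun s => 2 * ft s)). apply continuous_const.
    apply (continuous_mult (fun _ => 2) ft). apply continuous_const. auto.
    apply (continuous_comp u sqc). auto.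
    apply (lip_cont _ (2 * K)). lra. intros y z. apply sqc_lip. lra. }
  assert (HL : forall t y z, Rabs (F t y - F t z) <= Lc * Rabs (y - z)).
  { intros t y z. unfold F.
    replace (-2 + (1 - 2 * ft t - sqc y) * hinv t - (-2 + (1 - 2 * ft t - sqc z) * hinv t))
      with ((sqc z - sqc y) * hinv t) by ring.
    rewrite Rabs_mult. rewrite (Rabs_right (hinv t)) by (pose proof (Hhb t); lra).
    pose proof (sqc_lip K z y ltac:(lra)). fold (sqc z) (sqc y) in H.
    rewrite (Rabs_minus_sym z y) in H.
    pose proof (Hhb t). pose proof (Rabs_pos (y - z)). pose proof (Rabs_pos (sqc z - sqc y)).
    apply Rle_trans with (2 * K * Rabs (y - z) * / dm).
    apply Rmult_le_compat; lra.
    unfold Lc. unfold Rdiv. nra. }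
  destruct (picard F a e (T a) Lc Hae HLc HF HL) as [P [HPc [HPa HPd]]].
  assert (EFG : forall x y, a <= x <= e -> -K <= y <= K -> F x y = Gf ft x y).
  { intros x y Hx Hy. unfold F, Gf, sqc, hinv. rewrite !clamp_id by lra. reflexivity. }
  assert (HbarP : forall x, a <= x <= be/4 -> Lb be x < P x < -x).
  { destruct HK1 as [HK1a HK1b].
    apply (barrier P ft a (be/4) be K); try lra; auto.
    - intros x Hx. split. apply Hftb. apply Hbe2.
    - intros x Hx HPx. change (is_derive P x (Gf ft x (P x))). rewrite <- (EFG x (P x)) by (unfold e; lra).
      apply HPd. unfold e; lra. }
  assert (HPK : forall x, a <= x <= be/4 -> -K <= P x <= K).
  { intros x Hx. pose proof (HbarP x Hx). pose proof (Lb_ge be x ltac:(lra) ltac:(lra) ltac:(lra) ltac:(lra)).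
    lra. }
  assert (HTc : forall x, -1 < x < c -> continuous T x).
  { intros x Hx. destruct (Hode x Hx) as [Hex _].
    apply (ex_derive_continuous (K:=R_AbsRing) (V:=R_NormedModule)). auto. }
  assert (HTd : forall x, -1 < x < c -> is_derive T x (Gf fbar x (T x))).
  { intros x Hx. apply ode_deriv. nra. auto. }
  assert (HbarT : forall y x, a <= x <= y -> y < c -> Lb be x < T x < -x).
  { intros y x Hx Hy.
    destruct HK1 as [HK1a HK1b].
    apply (barrier T fbar a y be K); try lra; auto.
    - intros; apply HTc; lra.
    - intros w Hw. rewrite <- Hftid by lra. split. apply Hftb. apply Hbe2.
    - intros w Hw _. change (is_derive T w (Gf fbar w (T w))). apply HTd. lra. }
  assert (HTK : forall x, a <= x < c -> -K <= T x <= K).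
  { intros x Hx. pose proof (HbarT x x ltac:(lra) ltac:(lra)).
    pose proof (Lb_ge be x ltac:(lra) ltac:(lra) ltac:(lra) ltac:(lra)).
    lra. }
  assert (HPT : forall x, a <= x < c -> P x = T x).
  { intros x Hx. apply (uniq P T fbar a x K); try lra; auto.
    - intros; apply HTc; lra.
    - intros s Hs. split; apply Rabs_le. apply HPK; lra. apply HTK; lra.
    - intros s Hs. split.
      + replace (Gf fbar s (P s)) with (F s (P s)). apply HPd. unfold e; lra.
        rewrite EFG. unfold Gf. rewrite Hftid by lra. reflexivity. unfold e; lra. apply HPK; lra.
      + apply HTd; lra. }
  set (S := fun x => if Rlt_dec x a then T x else P x).
  assert (HS1 : forall x, x < c -> S x = T x).
  { intros x Hx. unfold S. destruct (Rlt_dec x a); auto. apply HPT. lra. }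
  assert (HS2 : forall x, a <= x -> S x = P x).
  { intros x Hx. unfold S. destruct (Rlt_dec x a); auto. lra. }
  exists S. split; [|split; [|split]].
  - intros x Hx. apply HS1. lra.
  - intros x Hx. apply eps_cc. intros eps0 He0.
    destruct (Rlt_or_le x c) as [Hxc|Hxc].
    + destruct (Req_dec x (-1)) as [Hx1|Hx1].
      * subst x.
        destruct (proj1 (filterlim_locally T (T (-1))) HT (mkposreal eps0 He0)) as [d1 Hd1].
        exists (Rmin d1 (c + 1)). split. apply Rmin_pos. destruct d1; auto. lra.
        intros y Hy Hyx. rewrite HS1, HS1 by (try lra; pose proof (Rmin_r d1 (c+1)); revert Hyx; unfold Rabs; destruct (Rcase_abs (y - _)); intros; lra).
        destruct (Req_dec y (-1)) as [->|Hy1].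
        rewrite Rminus_eq_0, Rabs_R0. auto.
        apply (Hd1 y). apply ball_R. pose proof (Rmin_l d1 (c+1)). lra. lra.
      * destruct (proj1 (cont_iff T x) (HTc x ltac:(lra)) eps0 He0) as [d [Hd Hdd]].
        exists (Rmin d (c - x)). split. apply Rmin_pos; lra.
        intros y Hy Hyx. pose proof (Rmin_l d (c - x)). pose proof (Rmin_r d (c - x)).
        rewrite HS1, HS1 by (try lra; revert Hyx; unfold Rabs; destruct (Rcase_abs (y - _)); intros; lra).
        apply Hdd. lra.
    + destruct (proj1 (cont_iff P x) (HPc x) eps0 He0) as [d [Hd Hdd]].
      exists (Rmin d (x - a)). split. apply Rmin_pos; lra.
      intros y Hy Hyx. pose proof (Rmin_l d (x - a)). pose proof (Rmin_r d (x - a)).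
      rewrite HS2, HS2 by (try lra; revert Hyx; unfold Rabs; destruct (Rcase_abs (y - _)); intros; lra).
      apply Hdd. lra.
  - intros x Hx. destruct (Rlt_or_le x c) as [Hxc|Hxc].
    + assert (Hloc : locally x (fun y => T y = S y)).
      { assert (Hp : 0 < c - x) by lra. exists (mkposreal _ Hp). intros y Hy.
        pose proof (proj1 (ball_R x y _) Hy) as Hy2. simpl in Hy2. rewrite HS1. auto.
        revert Hy2. unfold Rabs; destruct (Rcase_abs (y - x)); intros; lra. }
      destruct (Hode x ltac:(lra)) as [[l Hl] Heq].
      assert (HSd : is_derive S x l) by (apply (is_derive_ext_loc T); auto).
      split. exists l; auto.
      rewrite (is_derive_unique _ _ _ HSd), HS1 by lra.
      rewrite (is_derive_unique _ _ _ Hl) in Heq. auto.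
    + assert (Hloc : locally x (fun y => P y = S y)).
      { assert (Hp : 0 < x - a) by lra. exists (mkposreal _ Hp). intros y Hy.
        pose proof (proj1 (ball_R x y _) Hy) as Hy2. simpl in Hy2. rewrite HS2. auto.
        revert Hy2. unfold Rabs; destruct (Rcase_abs (y - x)); intros; lra. }
      assert (HPx := HPd x ltac:(unfold e; lra)).
      assert (HSd := is_derive_ext_loc _ _ _ _ Hloc HPx).
      split. eexists; eauto.
      rewrite (is_derive_unique _ _ _ HSd), HS2 by lra.
      rewrite EFG by (try (unfold e; lra); apply HPK; lra).
      unfold Gf. rewrite Hftid by lra. field. nra.
  - rewrite HS2 by lra. pose proof (HbarP 0 ltac:(lra)). lra.
Qed.
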